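(* Let $A$ be a real $n\times n$ matrix, let $\mathbf{y}$ be a symmetric Nash equilibrium of the bimatrix game $(A,A^T)$ (i.e., $(\mathbf{y},\mathbf{y})$ is a Nash equilibrium), and let $D$ be an $n\times n$ diagonal matrix with all diagonal entries positive. Then there exists a probability vector $\mathbf{x}\in\mathbb{R}^n$ such that $(\mathbf{x},\mathbf{y})$ is a Nash equilibrium of the bimatrix game $(A,D)$.
   Context: A bimatrix game $(A,B)$ with $n\times n$ matrices: players choose probability vectors $\mathbf{x},\mathbf{y}\in\mathbb{R}^n$, payoffs $\mathbf{x}^TA\mathbf{y}$ (first player) and $\mathbf{x}^TB\mathbf{y}$ (second player); a Nash equilibrium is a profile where no player gains by unilateral deviation. *)

(* Defs.v *)
(* Real matrices are modelled over an arbitrary real field R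
   (the statement is purely order-algebraic). *)
From HB Require Import structures.
From mathcomp Require Import all_boot all_order all_algebra.
Set Implicit Arguments. Unset Strict Implicit. Unset Printing Implicit Defensive.
Import Order.TTheory GRing.Theory Num.Theory.
Local Open Scope ring_scope.

Definition prob_vec (R : realFieldType) (n : nat) (x : 'cV[R]_n) : Prop :=
  (forall i, 0 <= x i 0) /\ \sum_(i < n) x i 0 = 1.

Definition payoff (R : realFieldType) (n : nat) (M : 'M[R]_n) (x y : 'cV[R]_n) : R :=
  (x^T *m M *m y) 0 0.

Definition nash_eq (R : realFieldType) (n : nat) (A B : 'M[R]_n) (x y : 'cV[R]_n) : Prop :=
  [/\ prob_vec x, prob_vec y,
      (forall x', prob_vec x' -> payoff A x' y <= payoff A x y) &
      (forall y', prob_vec y' -> payoff B x y' <= payoff B x y)].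

Definition pos_diag (R : realFieldType) (n : nat) (D : 'M[R]_n) : Prop :=
  (forall i j, i != j -> D i j = 0) /\ (forall i, 0 < D i i).

(* Main.v *)
Require Import Defs.
From HB Require Import structures.
From mathcomp Require Import all_boot all_order all_algebra.
Import Order.TTheory GRing.Theory Num.Theory.
Local Open Scope ring_scope.

Lemma payoffE (R : realFieldType) (n : nat) (M : 'M[R]_n) (x y : 'cV[R]_n) :
  payoff M x y = \sum_i x i 0 * \sum_j M i j * y j 0.
Proof.
rewrite /payoff mxE.
under eq_bigr do rewrite mxE big_distrl /=.
rewrite exchange_big /=; apply: eq_bigr => i _; rewrite big_distrr /=.
by apply: eq_bigr => j _; rewrite !mxE mulrA.
Qed.

Lemma delta_sum (R : realFieldType) (n : nat) (k : 'I_n) (f : 'I_n -> R) :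
  \sum_i (i == k)%:R * f i = f k.
Proof.
rewrite (bigD1 k) //= eqxx mul1r big1 ?addr0 // => i /negbTE ->; by rewrite mul0r.
Qed.

Theorem theoremA3 (R : realFieldType) (n : nat) (A D : 'M[R]_n) (y : 'cV[R]_n) :
  nash_eq A A^T y y -> pos_diag D ->
  exists x : 'cV[R]_n, prob_vec x /\ nash_eq A D x y.
Proof.
move=> [py _ hA _] [Dd Dp].
set v := fun i => \sum_j A i j * y j 0.
set p := payoff A y y.
have pE : p = \sum_i y i 0 * v i by rewrite /p payoffE.
have vle : forall k, v k <= p.
  move=> k; set e : 'cV[R]_n := \col_i (i == k)%:R.
  have pe : prob_vec e.
    split=> [i|]; first by rewrite mxE ler0n.
    by under eq_bigr do rewrite mxE -[_%:R]mulr1; rewrite delta_sum.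
  have := hA e pe; rewrite payoffE.
  by under eq_bigr do rewrite mxE; rewrite delta_sum.
have veq : forall i, 0 < y i 0 -> v i = p.
  move=> i yi.
  have h0 : \sum_j y j 0 * (p - v j) = 0.
    under eq_bigr do rewrite mulrBr.
    by rewrite sumrB -big_distrl /= (proj2 py) mul1r -pE subrr.
  have nn : forall j, 0 <= y j 0 * (p - v j).
    by move=> j; rewrite mulr_ge0 ?(proj1 py) // subr_ge0.
  have := h0; rewrite (bigD1 i) //=.
  have s0 : 0 <= \sum_(j < n | j != i) y j 0 * (p - v j) by apply: sumr_ge0.
  move=> h; have : y i 0 * (p - v i) = 0.
    apply/eqP; rewrite eq_le nn andbT.
    by rewrite -h lerDl.
  move/eqP; rewrite mulf_eq0 gt_eqF //= subr_eq0 => /eqP ->//.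
set w := fun i : 'I_n => if 0 < y i 0 then (D i i)^-1 else 0.
set S := \sum_i w i.
have w0 : forall i, 0 <= w i.
  by move=> i; rewrite /w; case: ifP => // _; rewrite invr_ge0 ltW.
have Spos : 0 < S.
  have [i yi] : exists i, 0 < y i 0.
    apply/existsP; apply: contraT; rewrite negb_exists => /forallP H.
    have : \sum_i y i 0 <= 0.
      by apply: sumr_le0 => i _; rewrite leNgt H.
    by rewrite (proj2 py) ler10.
  rewrite /S (bigD1 i) //= {1}/w yi.
  apply: ltr_pwDl; first by rewrite invr_gt0.
  by apply: sumr_ge0.
set x : 'cV[R]_n := \col_i (w i / S).
have px : prob_vec x.
  split=> [i|]; first by rewrite mxE divr_ge0 // ltW.
  under eq_bigr do rewrite mxE.
  by rewrite -big_distrl /= -/S divff // gt_eqF.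
have xy0 : forall i, ~~ (0 < y i 0) -> x i 0 = 0.
  by move=> i /negbTE h; rewrite mxE /w h mul0r.
have xd : forall i, x i 0 * D i i = if 0 < y i 0 then S^-1 else 0.
  move=> i; rewrite mxE /w; case: ifP => _; last by rewrite !mul0r.
  by rewrite mulrC mulrA divff ?mul1r // gt_eqF.
have Dsum : forall z : 'cV[R]_n, forall i, \sum_j D i j * z j 0 = D i i * z i 0.
  move=> z i; rewrite (bigD1 i) //= big1 ?addr0 // => j ji.
  by rewrite Dd ?mul0r // eq_sym.
have pD : forall z : 'cV[R]_n, payoff D x z = \sum_i (if 0 < y i 0 then S^-1 else 0) * z i 0.
  move=> z; rewrite payoffE; apply: eq_bigr => i _; by rewrite Dsum mulrA xd.
exists x; split=> //; split=> //.
- move=> x' px'.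
  have -> : payoff A x y = p.
    rewrite payoffE -[p]mul1r -(proj2 px) big_distrl /=; apply: eq_bigr => i _.
    case: (boolP (0 < y i 0)) => h; first by rewrite -/(v i) veq.
    by rewrite xy0 // !mul0r.
  rewrite payoffE -[p]mul1r -(proj2 px') big_distrl /=; apply: ler_sum => i _.
  by rewrite ler_wpM2l ?(proj1 px') //; apply: vle.
- move=> y' py'; rewrite !pD.
  have -> : \sum_i (if 0 < y i 0 then S^-1 else 0) * y i 0 = S^-1.
    transitivity (\sum_i S^-1 * y i 0); last by rewrite -big_distrr /= (proj2 py) mulr1.
    apply: eq_bigr => i _.
    case: ifP => // h.
    have y0 : y i 0 = 0 by apply/eqP; rewrite eq_le (proj1 py) andbT leNgt h.
    by rewrite y0 !mulr0.
  apply: (@le_trans _ _ (\sum_i S^-1 * y' i 0)); last by rewrite -big_distrr /= (proj2 py') mulr1.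
  apply: ler_sum => i _.
  apply: ler_wpM2r; first exact: (proj1 py').
  by case: ifP => // _; rewrite invr_ge0 ltW.
Qed.
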